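(* Let $\mathcal H_A$ be a finite-dimensional Hilbert space, $N\ge1$, and let $\mathcal F(A)\subseteq\mathcal D(\mathcal H_A)$ be a convex set of free states, with $N$-partite free states $\mathcal F(A_1\dots A_N)=\mathrm{Conv}\big(\mathcal F(A)\otimes\dots\otimes\mathcal F(A)\big)$ ($N$ factors). Let $\mathcal F'(A)\subseteq\mathcal F(A)$ be affine and let $\Delta'$ be a resource-censoring map for $(\mathcal F(A),\mathcal F'(A))$ satisfying the standing assumptions below, which is moreover entanglement breaking. Then the censorship implemented by $(\Delta')^{\otimes N}$ is unbreakable: there is no $\rho\in\mathcal D(\mathcal H_A^{\otimes N})$ with $\rho\notin\mathcal F(A_1\dots A_N)$ and $(\Delta')^{\otimes N}(\rho)=\rho$. In particular, $\mathrm{Aff}\big(\mathcal F'(A)^{\otimes N}\big)\subseteq\mathrm{Conv}\big(\mathcal F'(A)^{\otimes N}\big)\subseteq\mathcal F(A_1\dots A_N)$.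
   Context: $\mathcal D(\mathcal H)$ denotes the density operators on a finite-dimensional Hilbert space $\mathcal H$. For $S\subseteq\mathcal D(\mathcal H)$, $\mathrm{Aff}(S)=\{\sum_a t_a\sigma_a:\ \text{finitely many }\sigma_a\in S,\ t_a\in\mathbb R,\ \sum_a t_a=1\}\cap\mathcal D(\mathcal H)$ and $\mathrm{Conv}(S)$ is the same with $t_a\ge0$; $S$ is affine if $\mathrm{Aff}(S)=S$ and convex if $\mathrm{Conv}(S)=S$. $S^{\otimes N}=S\otimes\dots\otimes S=\{\rho_1\otimes\dots\otimes\rho_N:\rho_a\in S\}$. A channel is a linear completely positive trace-preserving map. A resource-censoring (RC) map for $(\mathcal F(A),\mathcal F'(A))$ is a channel $\Delta'$ on operators on $\mathcal H_A$ with $\Delta'(\rho)\in\mathcal F(A)$ for all $\rho\in\mathcal D(\mathcal H_A)$ and $\Delta'(\sigma)=\sigma$ for all $\sigma\in\mathcal F'(A)$. Standing assumptions: $\Delta'\circ\Delta'=\Delta'$ and $\mathcal F'(A)$ is exactly the set of density operators fixed by $\Delta'$. $\Delta'$ is entanglement breaking if for every finite-dimensional $\mathcal K$ and every $\rho\in\mathcal D(\mathcal K\otimes\mathcal H_A)$, $(\mathrm{id}_{\mathcal K}\otimes\Delta')(\rho)\in\mathrm{Conv}(\mathcal D(\mathcal K)\otimes\mathcal D(\mathcal H_A))$. *)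

(* Defs.v *)
From mathcomp Require Import all_boot all_order all_algebra.
From mathcomp Require Export mxtens.
Set Implicit Arguments. Unset Strict Implicit. Unset Printing Implicit Defensive.
Import Order.TTheory GRing.Theory Num.Theory.
Local Open Scope ring_scope.

Section Quantum.
Variable C : numClosedFieldType.

Definition adjmx {m n} (A : 'M[C]_(m, n)) : 'M[C]_(n, m) := (map_mx Num.conj A)^T.

Definition psd {n} (A : 'M[C]_n) : Prop :=
  A = adjmx A /\ forall v : 'cV[C]_n, 0 <= (adjmx v *m A *m v) 0 0.

Definition density {n} (A : 'M[C]_n) : Prop := psd A /\ \tr A = 1.

Definition conv {n} (S : 'M[C]_n -> Prop) (X : 'M[C]_n) : Prop :=
  density X /\
  exists (m : nat) (t : 'I_m -> C) (s : 'I_m -> 'M[C]_n),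
    (forall a, 0 <= t a) /\ (forall a, S (s a)) /\
    \sum_(a < m) t a = 1 /\ X = \sum_(a < m) t a *: s a.

Definition aff {n} (S : 'M[C]_n -> Prop) (X : 'M[C]_n) : Prop :=
  density X /\
  exists (m : nat) (t : 'I_m -> C) (s : 'I_m -> 'M[C]_n),
    (forall a, t a \is Num.real) /\ (forall a, S (s a)) /\
    \sum_(a < m) t a = 1 /\ X = \sum_(a < m) t a *: s a.

Definition linmap {a b} (f : 'M[C]_a -> 'M[C]_b) : Prop :=
  forall (c : C) X Y, f (c *: X + Y) = c *: f X + f Y.

(* tensor product f (x) g of linear maps, defined by linear extension on
   matrix units: (f (x) g)(X) = sum X_{(i,k),(j,l)} f(E_ij) (x) g(E_kl) *)
Definition map_tens {a a' b b'} (f : 'M[C]_a -> 'M[C]_a') (g : 'M[C]_b -> 'M[C]_b')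
  (X : 'M[C]_(a * b)) : 'M[C]_(a' * b') :=
  \sum_(i < a) \sum_(j < a) \sum_(k < b) \sum_(l < b)
     X (mxtens_index (i, k)) (mxtens_index (j, l)) *:
       (f (delta_mx i j) *t g (delta_mx k l)).

Definition channel {d} (f : 'M[C]_d -> 'M[C]_d) : Prop :=
  linmap f /\
  (forall (k : nat) (X : 'M[C]_(k * d)), psd X -> psd (map_tens id f X)) /\
  (forall X, \tr (f X) = \tr X).

Definition rc_map {d} (F F' : 'M[C]_d -> Prop) (D : 'M[C]_d -> 'M[C]_d) : Prop :=
  channel D /\ (forall rho, density rho -> F (D rho)) /\ (forall s, F' s -> D s = s).

Definition entanglement_breaking {d} (D : 'M[C]_d -> 'M[C]_d) : Prop :=
  forall (k : nat) (rho : 'M[C]_(k * d)), density rho ->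
    conv (fun X : 'M[C]_(k * d) =>
            exists (s : 'M[C]_k) (t : 'M[C]_d), density s /\ density t /\ X = s *t t)
         (map_tens id D rho).

(* dimension d^N of H^{(x) N}, with d^(N+1) = d * d^N definitionally *)
Fixpoint pw (d n : nat) : nat := if n is n'.+1 then d * pw d n' else 1.

(* S^{(x) N} = { rho_1 (x) ... (x) rho_N } (with a trailing trivial 1x1 factor) *)
Fixpoint prodset {d} (S : 'M[C]_d -> Prop) (n : nat) : 'M[C]_(pw d n) -> Prop :=
  match n with
  | 0 => fun X => X = 1%:M
  | n'.+1 => fun X => exists (r : 'M[C]_d) (s : 'M[C]_(pw d n')),
                        S r /\ @prodset d S n' s /\ X = r *t s
  end.

Fixpoint tpow {d} (D : 'M[C]_d -> 'M[C]_d) (n : nat) : 'M[C]_(pw d n) -> 'M[C]_(pw d n) :=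
  match n with
  | 0 => id
  | n'.+1 => map_tens D (@tpow d D n')
  end.

End Quantum.
Arguments prodset {C d} S n _.
Arguments tpow {C d} D n _.

(* Main.v *)
Require Import Defs.
From mathcomp Require Import all_boot all_order all_algebra.
Import Order.TTheory GRing.Theory Num.Theory.
Local Open Scope ring_scope.
Set Implicit Arguments. Unset Strict Implicit. Unset Printing Implicit Defensive.

Section S.
Variable C : numClosedFieldType.

Lemma lin0 a b (f : 'M[C]_a -> 'M[C]_b) : linmap f -> f 0 = 0.
Proof.
move=> hf; have h := hf 1 0 0; rewrite scale1r addr0 scale1r in h.
by apply: (addrI (f 0)); rewrite addr0 -h.
Qed.

Lemma linZ a b (f : 'M[C]_a -> 'M[C]_b) c X : linmap f -> f (c *: X) = c *: f X.
Proof. by move=> hf; rewrite -[c *: X]addr0 hf lin0 // addr0. Qed.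

Lemma linD a b (f : 'M[C]_a -> 'M[C]_b) X Y : linmap f -> f (X + Y) = f X + f Y.
Proof. by move=> hf; have := hf 1 X Y; rewrite !scale1r. Qed.

Lemma lin_sum a b (f : 'M[C]_a -> 'M[C]_b) (I : finType) (F : I -> 'M[C]_a) :
  linmap f -> f (\sum_i F i) = \sum_i f (F i).
Proof.
move=> hf; elim/big_rec2: _ => [|i x y _ <-]; first exact: lin0.
by rewrite linD.
Qed.

Lemma lin_id n : linmap (@id 'M[C]_n).
Proof. by []. Qed.

Lemma tensDl m n p q (A B : 'M[C]_(m, n)) (M : 'M[C]_(p, q)) :
  (A + B) *t M = A *t M + B *t M.
Proof. by apply/matrixP=> i j; rewrite !mxE mulrDl. Qed.
Lemma tensDr m n p q (A : 'M[C]_(m, n)) (M N : 'M[C]_(p, q)) :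
  A *t (M + N) = A *t M + A *t N.
Proof. by apply/matrixP=> i j; rewrite !mxE mulrDr. Qed.
Lemma tensZl m n p q c (A : 'M[C]_(m, n)) (M : 'M[C]_(p, q)) :
  (c *: A) *t M = c *: (A *t M).
Proof. by apply/matrixP=> i j; rewrite !mxE mulrA. Qed.
Lemma tensZr m n p q c (A : 'M[C]_(m, n)) (M : 'M[C]_(p, q)) :
  A *t (c *: M) = c *: (A *t M).
Proof. by apply/matrixP=> i j; rewrite !mxE mulrCA. Qed.
Lemma tens_suml m n p q (I : finType) (F : I -> 'M[C]_(m, n)) (M : 'M[C]_(p, q)) :
  (\sum_i F i) *t M = \sum_i (F i *t M).
Proof. by elim/big_rec2: _ => [|i x y _ <-]; rewrite ?tens0mx // tensDl. Qed.
Lemma tens_sumr m n p q (I : finType) (A : 'M[C]_(m, n)) (F : I -> 'M[C]_(p, q)) :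
  A *t (\sum_i F i) = \sum_i (A *t F i).
Proof. by elim/big_rec2: _ => [|i x y _ <-]; rewrite ?tensmx0 // tensDr. Qed.

Lemma map_tens_lin a a' b b' (f : 'M[C]_a -> 'M[C]_a') (g : 'M[C]_b -> 'M[C]_b') :
  linmap (map_tens f g).
Proof.
move=> c X Y; rewrite /map_tens scaler_sumr -big_split; apply: eq_bigr => i _.
rewrite scaler_sumr -big_split; apply: eq_bigr => j _.
rewrite scaler_sumr -big_split; apply: eq_bigr => k _.
rewrite scaler_sumr -big_split; apply: eq_bigr => l _.
by rewrite !mxE scalerA scalerDl.
Qed.

Lemma sum_index a b (F : 'I_(a * b) -> 'M[C]_(a * b)) :
  \sum_p F p = \sum_i \sum_k F (mxtens_index (i, k)).
Proof.
rewrite pair_big /= (reindex (@mxtens_index a b)) /=.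
  by apply: eq_bigr => -[i k].
by exists (@mxtens_unindex a b) => p _; rewrite (mxtens_indexK, mxtens_unindexK).
Qed.

Lemma delta_tens a b (i j : 'I_a) (k l : 'I_b) :
  delta_mx (mxtens_index (i, k)) (mxtens_index (j, l)) = (delta_mx i j *t delta_mx k l : 'M[C]_(a*b)).
Proof.
apply/matrixP=> p q; case: (mxtens_indexP p) => i0 k0; case: (mxtens_indexP q) => j0 l0.
rewrite tensmxE !mxE -natrM mulnb; congr (_ %:R).
rewrite !(inj_eq (can_inj (@mxtens_indexK _ _))) !xpair_eqE.
by case: (i0 == i); case: (j0==j); case: (k0==k); case: (l0==l).
Qed.

Lemma tens_expand a b (X : 'M[C]_(a * b)) :
  X = \sum_(i < a) \sum_(j < a) \sum_(k < b) \sum_(l < b)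
     X (mxtens_index (i, k)) (mxtens_index (j, l)) *: (delta_mx i j *t delta_mx k l).
Proof.
rewrite {1}[X]matrix_sum_delta sum_index; apply: eq_bigr => i _.
under eq_bigr do rewrite sum_index.
rewrite exchange_big /=; apply: eq_bigr => j _; apply: eq_bigr => k _; apply: eq_bigr => l _.
by rewrite delta_tens.
Qed.


Lemma lin_comp a b c (f : 'M[C]_a -> 'M[C]_b) (g : 'M[C]_b -> 'M[C]_c) :
  linmap f -> linmap g -> linmap (fun X => g (f X)).
Proof. by move=> hf hg c0 X Y; rewrite hf hg. Qed.

Lemma lin_ext a b c (L1 L2 : 'M[C]_(a * b) -> 'M[C]_c) :
  linmap L1 -> linmap L2 -> (forall A B, L1 (A *t B) = L2 (A *t B)) -> forall X, L1 X = L2 X.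
Proof.
move=> h1 h2 h X; rewrite (tens_expand X) (lin_sum _ h1) (lin_sum _ h2).
apply: eq_bigr => i _; rewrite (lin_sum _ h1) (lin_sum _ h2).
apply: eq_bigr => j _; rewrite (lin_sum _ h1) (lin_sum _ h2).
apply: eq_bigr => k _; rewrite (lin_sum _ h1) (lin_sum _ h2).
by apply: eq_bigr => l _; rewrite !linZ // h.
Qed.

Lemma lin_expand a b (f : 'M[C]_a -> 'M[C]_b) A : linmap f ->
  f A = \sum_i \sum_j A i j *: f (delta_mx i j).
Proof.
move=> hf; rewrite {1}(matrix_sum_delta A) lin_sum //; apply: eq_bigr => i _.
by rewrite lin_sum //; apply: eq_bigr => j _; rewrite linZ.
Qed.

Lemma map_tens_tens a a' b b' (f : 'M[C]_a -> 'M[C]_a') (g : 'M[C]_b -> 'M[C]_b') A B :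
  linmap f -> linmap g -> map_tens f g (A *t B) = f A *t g B.
Proof.
move=> hf hg; rewrite /map_tens (lin_expand A hf) (lin_expand B hg) tens_suml.
apply: eq_bigr => i _; rewrite tens_suml; apply: eq_bigr => j _.
rewrite tens_sumr; apply: eq_bigr => k _; rewrite tens_sumr; apply: eq_bigr => l _.
by rewrite tensmxE tensZl tensZr scalerA.
Qed.

Lemma map_tens_comp a b (D : 'M[C]_a -> 'M[C]_a) (G : 'M[C]_b -> 'M[C]_b) X :
  linmap D -> linmap G -> (forall Y, D (D Y) = D Y) ->
  map_tens D G (map_tens D id X) = map_tens D G X.
Proof.
move=> hD hG hDD.
apply: (@lin_ext _ _ _ (fun X => map_tens D G (map_tens D id X)) (map_tens D G)).
- exact: lin_comp (map_tens_lin _ _) (map_tens_lin _ _).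
- exact: map_tens_lin.
by move=> A B; rewrite !map_tens_tens // hDD.
Qed.

Definition sw a b (p : 'I_(a * b)) : 'I_(b * a) :=
  mxtens_index ((mxtens_unindex p).2, (mxtens_unindex p).1).

Lemma swK a b (p : 'I_(a * b)) : sw (sw p) = p.
Proof. by case: (mxtens_indexP p) => i k; rewrite /sw !mxtens_indexK. Qed.

Lemma sw_bij a b : bijective (@sw a b).
Proof. by exists (@sw b a) => p; rewrite swK. Qed.

Definition swp a b (X : 'M[C]_(a * b)) : 'M[C]_(b * a) := \matrix_(p, q) X (sw p) (sw q).

Lemma swp_lin a b : linmap (@swp a b).
Proof. by move=> c X Y; apply/matrixP => p q; rewrite !mxE. Qed.

Lemma swpK a b (X : 'M[C]_(a * b)) : swp (swp X) = X.
Proof. by apply/matrixP => p q; rewrite !mxE !swK. Qed.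

Lemma swp_tens a b (A : 'M[C]_a) (B : 'M[C]_b) : swp (A *t B) = B *t A.
Proof.
apply/matrixP => p q; case: (mxtens_indexP p) => i k; case: (mxtens_indexP q) => j l.
by rewrite mxE /sw !mxtens_indexK /= !tensmxE mulrC.
Qed.

Lemma swap_comm a b (D : 'M[C]_a -> 'M[C]_a) (X : 'M[C]_(a * b)) : linmap D ->
  map_tens D id X = swp (map_tens id D (swp X)).
Proof.
move=> hD.
apply: (@lin_ext _ _ _ (map_tens D id) (fun X => swp (map_tens id D (swp X)))).
- exact: map_tens_lin.
- exact: lin_comp (lin_comp (@swp_lin _ _) (map_tens_lin _ _)) (@swp_lin _ _).
by move=> A B; rewrite swp_tens !map_tens_tens // swp_tens.
Qed.


Lemma adjmxE m n (A : 'M[C]_(m, n)) i j : adjmx A i j = (A j i)^*.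
Proof. by rewrite !mxE. Qed.

Lemma adjmxK m n (A : 'M[C]_(m, n)) : adjmx (adjmx A) = A.
Proof. by apply/matrixP => i j; rewrite !adjmxE conjCK. Qed.

Lemma adjmxM m n p (A : 'M[C]_(m, n)) (B : 'M[C]_(n, p)) :
  adjmx (A *m B) = adjmx B *m adjmx A.
Proof.
apply/matrixP => i j; rewrite adjmxE !mxE rmorph_sum; apply: eq_bigr => k _.
by rewrite rmorphM !adjmxE mulrC.
Qed.

Lemma adjmxD m n (A B : 'M[C]_(m, n)) : adjmx (A + B) = adjmx A + adjmx B.
Proof. by apply/matrixP => i j; rewrite !mxE rmorphD. Qed.

Lemma adjmxZ m n c (A : 'M[C]_(m, n)) : adjmx (c *: A) = c^* *: adjmx A.
Proof. by apply/matrixP => i j; rewrite !mxE rmorphM. Qed.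

Lemma adjmx0 m n : adjmx (0 : 'M[C]_(m, n)) = 0.
Proof. by apply/matrixP => i j; rewrite !mxE rmorph0. Qed.

Lemma adjmx_tens m n p q (A : 'M[C]_(m, n)) (B : 'M[C]_(p, q)) :
  adjmx (A *t B) = adjmx A *t adjmx B.
Proof. by apply/matrixP => i j; rewrite !mxE rmorphM. Qed.

Lemma gram_ge0 m n (W : 'M[C]_(m, n)) (v : 'cV[C]_n) :
  0 <= (adjmx v *m (adjmx W *m W) *m v) 0 0.
Proof.
rewrite mulmxA -adjmxM -mulmxA mxE; apply: sumr_ge0 => k _.
by rewrite adjmxE mulrC mul_conjC_ge0.
Qed.

Lemma psd0 n : psd (0 : 'M[C]_n).
Proof. by split; [rewrite adjmx0 | move=> v; rewrite mulmx0 mul0mx mxE]. Qed.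

Lemma psdD n (A B : 'M[C]_n) : psd A -> psd B -> psd (A + B).
Proof.
move=> [hA qA] [hB qB]; split; first by rewrite adjmxD -hA -hB.
by move=> v; rewrite mulmxDr mulmxDl mxE addr_ge0.
Qed.

Lemma psdZ n c (A : 'M[C]_n) : 0 <= c -> psd A -> psd (c *: A).
Proof.
move=> hc [hA qA]; split; first by rewrite adjmxZ geC0_conj // -hA.
by move=> v; rewrite -scalemxAr -scalemxAl mxE; apply: mulr_ge0.
Qed.

Lemma psd1 n : psd (1%:M : 'M[C]_n).
Proof.
have h : adjmx (1%:M : 'M[C]_n) = 1%:M.
  by apply/matrixP => i j; rewrite adjmxE !mxE eq_sym rmorph_nat.
split; first by rewrite h.
move=> v; have -> : (1%:M : 'M[C]_n) = adjmx 1%:M *m 1%:M by rewrite h mulmx1.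
exact: gram_ge0.
Qed.


Lemma psd_gram n (A : 'M[C]_n) : psd A -> exists Y : 'M[C]_n, A = adjmx Y *m Y.
Proof.
move=> [hA qA].
have hA' : map_mx Num.conj A^T = A by rewrite {2}hA /adjmx map_trmx.
have nA : A \is normalmx by apply/normalmxP; rewrite hA'.
have /orthomx_spectralP eA := nA.
set P := spectralmx A in eA; set sp := spectral_diag A in eA.
have uP : P \is unitarymx by apply: spectral_unitarymx.
have PP : P *m map_mx Num.conj P^T = 1%:M by apply/unitarymxP.
have adjP : adjmx P = map_mx Num.conj P^T by rewrite /adjmx map_trmx.
rewrite invmx_unitary // in eA.
have sp_ge0 : forall i, 0 <= sp 0 i.
  move=> i; have := qA (map_mx Num.conj P^T *m delta_mx i 0).
  rewrite adjmxM -adjP adjmxK.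
  have -> : adjmx (delta_mx i 0 : 'cV[C]_n) = delta_mx 0 i.
    by apply/matrixP => p q; rewrite adjmxE !mxE rmorph_nat andbC.
  rewrite adjP eA !mulmxA -(mulmxA _ P) PP mulmx1 -(mulmxA _ P) PP mulmx1.
  by rewrite -rowE -colE !mxE eqxx mulr1n.
pose s := \row_i sqrtC (sp 0 i).
exists (diag_mx s *m P).
have hs : adjmx (diag_mx s) = diag_mx s.
  apply/matrixP => i j; rewrite adjmxE !mxE eq_sym rmorphMn.
  case: (eqVneq i j) => [<-|_]; last by rewrite !mulr0n.
  by rewrite !mulr1n; apply: geC0_conj; rewrite sqrtC_ge0.
rewrite adjmxM hs adjP mulmxA -[_ *m diag_mx s *m diag_mx s]mulmxA mulmx_diag {1}eA.
congr (_ *m _ *m _); congr diag_mx; apply/rowP => i.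
by rewrite !mxE -expr2 sqrtCK.
Qed.


Lemma psd_tens m n (A : 'M[C]_m) (B : 'M[C]_n) : psd A -> psd B -> psd (A *t B).
Proof.
move=> pA pB; have [Y eY] := psd_gram pA; have [Z eZ] := psd_gram pB.
case: pA => hA _; case: pB => hB _.
split; first by rewrite adjmx_tens -hA -hB.
move=> v; rewrite eY eZ -tensmx_mul -adjmx_tens; exact: gram_ge0.
Qed.

Lemma tr_tens m n (A : 'M[C]_m) (B : 'M[C]_n) : \tr (A *t B) = \tr A * \tr B.
Proof. by rewrite /mxtrace mulr_sum; apply: eq_bigr => i _; rewrite mxE. Qed.

Lemma density_tens m n (A : 'M[C]_m) (B : 'M[C]_n) :
  density A -> density B -> density (A *t B).
Proof.
by move=> [pA tA] [pB tB]; split; [exact: psd_tens | rewrite tr_tens tA tB mulr1].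
Qed.

Lemma density1 : density (1%:M : 'M[C]_1).
Proof. by split; [exact: psd1 | rewrite mxtrace1]. Qed.

Lemma qformE n (X : 'M[C]_n) (v : 'cV[C]_n) :
  (adjmx v *m X *m v) 0 0 = \sum_q \sum_p (v p 0)^* * X p q * v q 0.
Proof.
rewrite mxE; apply: eq_bigr => q _; rewrite mxE mulr_suml.
by apply: eq_bigr => p _; rewrite adjmxE.
Qed.

Lemma sum_sw a b (F : 'I_(b * a) -> C) : \sum_p F p = \sum_q F (@sw a b q).
Proof. by apply: reindex; exists (@sw b a) => p _; rewrite swK. Qed.

Lemma density_swp a b (X : 'M[C]_(a * b)) : density X -> density (swp X).
Proof.
move=> [[hX qX] tX]; split; first split.
- apply/matrixP => p q; rewrite adjmxE !mxE.
  by have := congr1 (fun M : 'M[C]_(a * b) => M (sw p) (sw q)) hX; rewrite /= adjmxE => ->.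
- move=> v; rewrite qformE.
  have := qX (\col_p v (sw p) 0); rewrite qformE.
  congr (_ <= _) => //.
  rewrite sum_sw; apply: eq_bigr => q _; rewrite sum_sw; apply: eq_bigr => p _.
  by rewrite !mxE !swK.
- by rewrite -tX /mxtrace sum_sw; apply: eq_bigr => p _; rewrite mxE swK.
Qed.


Definition wc n (S : 'M[C]_n -> Prop) (X : 'M[C]_n) (w : C) :=
  exists l : seq (C * 'M[C]_n), (forall x, x \in l -> 0 <= x.1 /\ S x.2) /\
    \sum_(x <- l) x.1 = w /\ X = \sum_(x <- l) x.1 *: x.2.

Lemma wc0 n (S : 'M[C]_n -> Prop) : wc S 0 0.
Proof. by exists [::]; rewrite !big_nil. Qed.

Lemma wc1 n (S : 'M[C]_n -> Prop) Y : S Y -> wc S Y 1.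
Proof.
move=> hY; exists [:: (1, Y)]; rewrite !big_seq1 scale1r; split => //.
by move=> x; rewrite inE => /eqP -> /=.
Qed.

Lemma wcD n (S : 'M[C]_n -> Prop) X Y w v : wc S X w -> wc S Y v -> wc S (X + Y) (w + v).
Proof.
move=> [l1 [h1 [s1 e1]]] [l2 [h2 [s2 e2]]]; exists (l1 ++ l2).
rewrite !big_cat /= s1 s2 e1 e2; split => // x; rewrite mem_cat => /orP[]; auto.
Qed.

Lemma wcZ n (S : 'M[C]_n -> Prop) X w c : 0 <= c -> wc S X w -> wc S (c *: X) (c * w).
Proof.
move=> hc [l [h [s e]]]; exists [seq (c * x.1, x.2) | x <- l].
rewrite !big_map /= -s e mulr_sumr scaler_sumr; split; last split.
- move=> x /mapP [y yl ->] /=; have [h1 h2] := h y yl; split => //; exact: mulr_ge0.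
- by [].
by apply: eq_bigr => y _; rewrite scalerA.
Qed.

Lemma wc_sum n (S : 'M[C]_n -> Prop) m (p : 'I_m -> C) (Y : 'I_m -> 'M[C]_n) :
  (forall a, 0 <= p a) -> (forall a, wc S (Y a) 1) ->
  wc S (\sum_a p a *: Y a) (\sum_a p a).
Proof.
move=> hp hY; elim/big_rec2: _ => [|a x y _ h]; first exact: wc0.
apply: wcD h; have := wcZ (hp a) (hY a); by rewrite mulr1.
Qed.

Lemma wc_mono n (S T : 'M[C]_n -> Prop) X w : (forall u, S u -> T u) -> wc S X w -> wc T X w.
Proof.
move=> hST [l [h [s e]]]; exists l; split => // x xl; have [h1 h2] := h x xl; auto.
Qed.

Lemma wc_tens m n (S : 'M[C]_n -> Prop) (A : 'M[C]_m) V w : wc S V w ->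
  wc (fun Z => exists u, S u /\ Z = A *t u) (A *t V) w.
Proof.
move=> [l [h [s e]]]; exists [seq (x.1, A *t x.2) | x <- l].
rewrite !big_map /= e; split; last split => //.
- move=> x /mapP [y yl ->] /=; have [h1 h2] := h y yl; split => //; exists y.2; auto.
elim/big_rec2: _ => [|y x1 x2 _ <-]; first by rewrite tensmx0.
by rewrite tensDr tensZr.
Qed.

Lemma wc_psd n (S : 'M[C]_n -> Prop) X w : (forall u, S u -> density u) ->
  wc S X w -> psd X /\ \tr X = w.
Proof.
move=> hS [l [h [<- ->]]]; elim: l h => [|x l IH] h.
  by rewrite !big_nil mxtrace0; split => //; exact: psd0.
rewrite !big_cons; have [|p1 t1] := IH.
  by move=> y yl; apply: h; rewrite inE yl orbT.
have [hx1 hx2] := h x (mem_head _ _); have [px tx] := hS _ hx2.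
split; first by apply: psdD => //; apply: psdZ.
by rewrite mxtraceD mxtraceZ tx mulr1 t1.
Qed.

Lemma conv_wc n (S : 'M[C]_n -> Prop) X : conv S X <-> density X /\ wc S X 1.
Proof.
split.
  move=> [dX [m [t [s [ht [hs [st eX]]]]]]]; split => //.
  by rewrite eX -st; apply: wc_sum => // a; apply: wc1.
move=> [dX [l [h [st e]]]]; split => //.
exists (size l), (fun a => (nth (0, 0) l a).1), (fun a => (nth (0, 0) l a).2).
split; last split; last split.
- by move=> a; have [] := h _ (mem_nth (0, 0) (ltn_ord a)).
- by move=> a; have [] := h _ (mem_nth (0, 0) (ltn_ord a)).
- by rewrite -st (big_nth (0, 0)) big_mkord.
by rewrite e (big_nth (0, 0)) big_mkord.
Qed.


Lemma wc_lin m n (S : 'M[C]_m -> Prop) (T : 'M[C]_n -> Prop) (L : 'M[C]_m -> 'M[C]_n) X w :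
  linmap L -> (forall u, S u -> wc T (L u) 1) -> wc S X w -> wc T (L X) w.
Proof.
move=> hL hST [l [h [<- ->]]]; elim: l h => [|x l IH] h.
  by rewrite !big_nil lin0 //; exact: wc0.
rewrite !big_cons linD // linZ //.
have [hx1 hx2] := h x (mem_head _ _).
apply: wcD; last by apply: IH => y yl; apply: h; rewrite inE yl orbT.
by have := wcZ hx1 (hST _ hx2); rewrite mulr1.
Qed.

Lemma tpow_lin d (D : 'M[C]_d -> 'M[C]_d) n : linmap (tpow D n).
Proof. by case: n => [|n] /=; [exact: lin_id | exact: map_tens_lin]. Qed.

Lemma prodset_density d (S : 'M[C]_d -> Prop) n u :
  (forall r, S r -> density r) -> prodset S n u -> density u.
Proof.
move=> hS; elim: n u => [|n IH] u /=; first by move=> ->; exact: density1.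
by move=> [r [s [hr [hs ->]]]]; apply: density_tens; auto.
Qed.

Lemma prodset_mono d (S T : 'M[C]_d -> Prop) n u :
  (forall r, S r -> T r) -> prodset S n u -> prodset T n u.
Proof.
move=> hS; elim: n u => [|n IH] u //=.
by move=> [r [s [hr [hs ->]]]]; exists r, s; auto.
Qed.

Lemma prodset_fix d (S : 'M[C]_d -> Prop) (D : 'M[C]_d -> 'M[C]_d) n u :
  linmap D -> (forall r, S r -> D r = r) -> prodset S n u -> tpow D n u = u.
Proof.
move=> hD hS; elim: n u => [|n IH] u //=.
move=> [r [s [hr [hs ->]]]]; rewrite map_tens_tens //; last exact: tpow_lin.
by rewrite hS // IH.
Qed.

Lemma density_1x1 (rho : 'M[C]_1) : density rho -> rho = 1%:M.
Proof.
move=> [_ t]; rewrite [rho]mx11_scalar; congr (_%:M).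
by rewrite -t /mxtrace big_ord1.
Qed.

Lemma key d (F' : 'M[C]_d -> Prop) (D : 'M[C]_d -> 'M[C]_d) :
  linmap D -> (forall X, D (D X) = D X) -> (forall rho, density rho -> F' (D rho)) ->
  entanglement_breaking D ->
  forall n (rho : 'M[C]_(pw d n)), density rho -> wc (prodset F' n) (tpow D n rho) 1.
Proof.
move=> hD hDD hF EB; elim=> [|n IH] rho drho.
  by rewrite /= (density_1x1 drho); apply: wc1.
have := EB _ _ (density_swp drho) => /conv_wc [_ hw].
rewrite /= -map_tens_comp //; last exact: tpow_lin.
rewrite swap_comm //.
apply: (wc_lin (L := fun Z => map_tens D (tpow D n) (swp Z)) _ _ hw).
  exact: lin_comp (@swp_lin _ _) (map_tens_lin _ _).
move=> u [x [y [dx [dy ->]]]]; rewrite swp_tens map_tens_tens //; last exact: tpow_lin.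
apply: wc_mono (wc_tens (D y) (IH x dx)).
by move=> Z [v [hv ->]]; exists (D y), v; auto.
Qed.

End S.

Theorem theorem3 (C : numClosedFieldType) (d N : nat)
  (F F' : 'M[C]_d -> Prop) (D : 'M[C]_d -> 'M[C]_d) :
  (0 < N)%N ->
  (* F(A) is a convex set of states *)
  (forall X, F X -> density X) ->
  (forall X, conv F X <-> F X) ->
  (* F'(A) is an affine subset of F(A) *)
  (forall X, F' X -> F X) ->
  (forall X, aff F' X <-> F' X) ->
  (* D is an RC map for (F, F') satisfying the standing assumptions *)
  rc_map F F' D ->
  (forall X, D (D X) = D X) ->
  (forall X, F' X <-> density X /\ D X = X) ->
  entanglement_breaking D ->
  (~ exists rho : 'M[C]_(pw d N),
       density rho /\ ~ conv (prodset F N) rho /\ tpow D N rho = rho) /\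
  (forall X, aff (prodset F' N) X -> conv (prodset F' N) X) /\
  (forall X, conv (prodset F' N) X -> conv (prodset F N) X).
Proof.
move=> _ hFd hFconv hF'F hF'aff [[hDlin [hCP hTP]] [hDF hDF']] hDD hF'char EB.
have hF'D : forall rho, density rho -> F' (D rho).
  by move=> rho dr; apply/hF'char; split; [apply: hFd; apply: hDF | apply: hDD].
have K := @key _ _ _ _ hDlin hDD hF'D EB N.
split; [|split].
- move=> [rho [drho [nc fx]]]; apply: nc; apply/conv_wc; split => //.
  rewrite -fx; apply: wc_mono (K _ drho) => u; exact: prodset_mono.
- move=> X [dX [m [t [s [_ [hs [_ eX]]]]]]].
  have fixX : tpow D N X = X.
    rewrite eX lin_sum; last exact: tpow_lin.
    apply: eq_bigr => a _; rewrite linZ; last exact: tpow_lin.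
    by rewrite (prodset_fix hDlin hDF' (hs a)).
  by apply/conv_wc; split => //; rewrite -fixX; apply: K.
move=> X /conv_wc [dX w]; apply/conv_wc; split => //.
by apply: wc_mono w => u; apply: prodset_mono.
Qed.
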